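(* If $G$ is a (simple) graph and $f$ is a demand function for the line graph $L(G)$ such that each edge $e = uv\in E(G)$ satisfies $f(e) \leq 1/(\max\{d(u), d(v)\} + 1)$, then $L(G)$ has an $f$-coloring.
   Context: The line graph $L(G)$ has vertex set $E(G)$, two edges being adjacent when they share an endpoint. A demand function for a graph $H$ is a function $f: V(H)\to [0,1]\cap\mathbb{Q}$. A fractional coloring of $H$ assigns to each vertex a measurable subset of $[0,1]$ so that adjacent vertices receive disjoint sets; an $f$-coloring is a fractional coloring $\phi$ with Lebesgue measure of $\phi(x)$ at least $f(x)$ for every vertex $x$. *)

(* Defs.v *)
From HB Require Import structures.
From mathcomp Require Import all_boot all_order all_algebra.
From mathcomp Require Import all_classical all_reals all_analysis.
Set Implicit Arguments. Unset Strict Implicit. Unset Printing Implicit Defensive.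
Import Order.TTheory GRing.Theory Num.Theory.

Definition simple_graph (V : finType) (adj : rel V) : Prop :=
  (forall u v, adj u v = adj v u) /\ (forall u, ~~ adj u u).

Definition is_edge (V : finType) (adj : rel V) (A : {set V}) : bool :=
  [exists u, exists v, adj u v && (A == [set u; v])].

Definition edge (V : finType) (adj : rel V) := {A : {set V} | is_edge adj A}.

Definition deg (V : finType) (adj : rel V) (u : V) : nat := #|[set v | adj u v]|.

Definition lg_adj (V : finType) (adj : rel V) (x y : edge adj) : Prop :=
  x <> y /\ exists w, w \in proj1_sig x /\ w \in proj1_sig y.

Local Open Scope classical_set_scope.
Local Open Scope ring_scope.

Definition demand_fun (V : finType) (adj : rel V) (f : edge adj -> rat) : Prop :=
  forall x, 0 <= f x <= 1.

Definition f_coloring (R : realType) (V : finType) (adj : rel V)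
    (f : edge adj -> rat) (phi : edge adj -> set R) : Prop :=
  (forall x, measurable (phi x) /\ phi x `<=` `[0%R, 1%R]) /\
  (forall x y, lg_adj x y -> phi x `&` phi y = set0) /\
  (forall x, ((ratr (f x) : R)%:E <= lebesgue_measure (phi x))%E).

(* Main.v *)
Require Import Defs.
From mathcomp Require Import all_boot all_order all_algebra.
From mathcomp Require Import all_classical all_reals all_analysis.
From mathcomp Require Import zify.
Import Order.TTheory GRing.Theory Num.Theory.

Module VZ.
Local Notation set0 := finset.set0.

Set Implicit Arguments. Unset Strict Implicit. Unset Printing Implicit Defensive.
Local Open Scope nat_scope.

Lemma card_bigcup_le (T I : finType) (P : pred I) (F : I -> {set T}) :
  #|\bigcup_(i | P i) F i| <= \sum_(i | P i) #|F i|.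
Proof.
elim/big_rec2: _ => [|i n A _ H]; first by rewrite cards0. apply: leq_trans (leq_card_setU _ _) _; by rewrite leq_add2l.
Qed.

Lemma disjE (T : finType) (A B : {set T}) :
  [disjoint A & B] <-> (forall e, e \in A -> e \in B -> False).
Proof.
split; first by move=> D e /(disjointFr D) ->.
by move=> H; apply/pred0P => e /=; apply/negP => /andP[]; exact: H.
Qed.

Lemma card_bigcup_disj (I : eqType) (T' : finType) (s : seq I) (A : I -> {set T'}) :
  uniq s -> {in s &, forall i j, i != j -> [disjoint A i & A j]} ->
  #|\bigcup_(i <- s) A i| = \sum_(i <- s) #|A i|.
Proof.
elim: s => [|i s IH] /=; first by rewrite !big_nil cards0.
move=> /andP[ni us] D; rewrite !big_cons cardsU IH //; last first.
  by move=> a b ha hb; apply: D; rewrite inE ?ha ?hb orbT.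
have -> : A i :&: \bigcup_(j <- s) A j = set0; last by rewrite cards0 subn0.
apply: disjoint_setI0; apply/disjE => e H1.
elim: s ni us D {IH} => [|j s IH] ni us D; first by rewrite big_nil inE.
rewrite big_cons inE => /orP[H2|H2].
  have : [disjoint A i & A j].
    by apply: D; rewrite ?inE ?eqxx ?orbT //; apply/eqP => E; rewrite E inE eqxx in ni.
  by move/disjE => D0; apply: (D0 e).
move: ni us; rewrite inE negb_or => /andP[_ ni] /andP[_ us].
apply: IH ni us _ H2 => a b ha hb; apply: D.
- by move: ha; rewrite !inE => /orP[->|->]; rewrite ?orbT.
- by move: hb; rewrite !inE => /orP[->|->]; rewrite ?orbT.
Qed.

Lemma arith1 (N M A1 A2 k : nat) : N <= M + A1 -> A1 < A2 -> A2 + k <= N -> k < M.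
Proof. lia. Qed.

Lemma arith2 (N M A1 A2 k j : nat) : N <= M + A1 -> A1 <= A2 -> A2 + k <= N -> j <= k -> j <= M.
Proof. lia. Qed.

Section Core.
Variables (V : finType) (adj : rel V) (N : nat) (m : V -> V -> nat).
Hypothesis adj_sym : symmetric adj.
Hypothesis adj_irr : irreflexive adj.
Hypothesis m_sym : forall u v, m u v = m v u.
Hypothesis m_adj : forall u v, ~~ adj u v -> m u v = 0.
Hypothesis mC : forall x y, adj x y -> \sum_v m y v + m x y <= N.

Implicit Types (c : V -> V -> {set 'I_N}) (e : 'I_N) (S : {set 'I_N}).

Definition proper (c : V -> V -> {set 'I_N}) :=
  (forall u v, c u v = c v u) /\ (forall u v w, v != w -> [disjoint c u v & c u w]).
Definition bnd (c : V -> V -> {set 'I_N}) := forall u v, #|c u v| <= m u v.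
Definition miss (c : V -> V -> {set 'I_N}) u := [set e | [forall v, e \notin c u v]].
Definition total (c : V -> V -> {set 'I_N}) := \sum_u \sum_v #|c u v|.

Lemma missP c u e : reflect (forall v, e \notin c u v) (e \in miss c u).
Proof. by rewrite inE; apply: (iffP forallP). Qed.

Lemma in_miss c u v e : e \in c u v -> e \in miss c u = false.
Proof. by move=> H; apply/negP => /missP /(_ v); rewrite H. Qed.

Lemma miss_card c u : N <= #|miss c u| + \sum_v #|c u v|.
Proof.
apply: leq_trans (leq_add (leqnn _) (card_bigcup_le _ _)).
have <- : ~: miss c u = \bigcup_(v | true) c u v.
  apply/setP => e; rewrite inE; apply/idP/finset.bigcupP.
    by rewrite inE negb_forall => /existsP[v]; rewrite negbK => ?; exists v.
  by move=> [v _ H]; rewrite (in_miss H).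
by rewrite cardsC card_ord.
Qed.

Lemma bnd_supp c u v : bnd c -> ~~ adj u v -> c u v = set0.
Proof. by move=> b /m_adj H; apply: cards0_eq; move: (b u v); rewrite H leqn0 => /eqP. Qed.

Lemma proper_uniq c u v w e : proper c -> e \in c u v -> e \in c u w -> v = w.
Proof.
move=> [_ D] H1 H2; apply/eqP; apply/negPn/negP => /D /disjointFr /(_ H1).
by rewrite H2.
Qed.



Definition upd (c : V -> V -> {set 'I_N}) a b S u v :=
  if ((u == a) && (v == b)) || ((u == b) && (v == a)) then S else c u v.

Lemma upd_proper c a b S : proper c -> a != b ->
  (forall w, w != b -> [disjoint S & c a w]) ->
  (forall w, w != a -> [disjoint S & c b w]) -> proper (upd c a b S).
Proof.
move=> [Cs Cd] ab Ha Hb; split.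
  move=> u v; rewrite /upd.
  have -> : ((v == a) && (u == b)) || ((v == b) && (u == a)) =
            ((u == a) && (v == b)) || ((u == b) && (v == a)).
    by rewrite orbC andbC [(v == a) && _]andbC.
  by rewrite Cs.
move=> u v w vw; rewrite /upd.
have [->|ua] := eqVneq u a.
  rewrite (negbTE ab) /= !orbF.
  case: ifP => /eqP vb; case: ifP => /eqP wb.
  - by subst; rewrite eqxx in vw.
  - by rewrite Ha //; apply/eqP.
  - by rewrite disjoint_sym Ha //; apply/eqP.
  - by apply: Cd.
have [->|ub] := eqVneq u b.
  rewrite /=.
  case: ifP => /eqP va; case: ifP => /eqP wa.
  - by subst; rewrite eqxx in vw.
  - by rewrite Hb //; apply/eqP.
  - by rewrite disjoint_sym Hb //; apply/eqP.
  - by apply: Cd.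
by rewrite /=; apply: Cd.
Qed.

Lemma upd_ne c a b S u v : ~~ (((u == a) && (v == b)) || ((u == b) && (v == a))) ->
  upd c a b S u v = c u v.
Proof. by rewrite /upd => /negbTE ->. Qed.

Lemma total_lt c c' a b : (forall u v, #|c u v| <= #|c' u v|) -> #|c a b| < #|c' a b| ->
  total c < total c'.
Proof.
move=> Hle Hlt; rewrite /total (bigD1 a) //= [X in _ < X](bigD1 a) //=.
apply: leq_trans (_ : \sum_v #|c' a v| + \sum_(i | i != a) \sum_v #|c i v| <= _).
  rewrite ltn_add2r (bigD1 b) //= [X in _ < X](bigD1 b) //=.
  by rewrite -addSn leq_add // leq_sum.
by rewrite leq_add2l leq_sum // => i _; rewrite leq_sum.
Qed.


Definition tw (al be e : 'I_N) := if e == al then be else if e == be then al else e.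

Lemma twK al be : involutive (tw al be).
Proof.
move=> e; rewrite /tw; have [->|ea] := eqVneq e al.
  by rewrite eqxx; case: eqP.
have [->|eb] := eqVneq e be; first by rewrite eqxx.
by rewrite (negbTE ea) (negbTE eb).
Qed.

Lemma tw_id al be e : e != al -> e != be -> tw al be e = e.
Proof. by rewrite /tw => /negbTE -> /negbTE ->. Qed.

Lemma tw_al al be : tw al be al = be.
Proof. by rewrite /tw eqxx. Qed.

Definition sw al be S := [set e | tw al be e \in S].

Lemma card_sw al be S : #|sw al be S| = #|S|.
Proof.
have -> : sw al be S = tw al be @^-1: S by apply/setP => e; rewrite !inE.
by apply: card_preimset; apply: (can_inj (twK al be)).
Qed.

Lemma sw_id al be S : al \notin S -> be \notin S -> sw al be S = S.
Proof.
move=> ha hb; apply/setP => e; rewrite inE.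
have [->|ea] := eqVneq e al; first by rewrite tw_al (negbTE ha) (negbTE hb).
have [->|eb] := eqVneq e be; first by rewrite /tw eqxx; case: ifP => _; rewrite ?(negbTE ha) ?(negbTE hb).
by rewrite tw_id.
Qed.

Definition swc al be c (K : {set V}) u v := if u \in K then sw al be (c u v) else c u v.

Definition closedK al be c (K : {set V}) :=
  forall u v, u \in K -> (al \in c u v) || (be \in c u v) -> v \in K.

Lemma swc_proper al be c K : proper c -> closedK al be c K -> proper (swc al be c K).
Proof.
move=> [Cs Cd] cK.
have out u v : u \in K -> v \notin K -> sw al be (c u v) = c u v.
  move=> uK vK; apply: sw_id; apply/negP => H; move/negP: vK; apply; apply: (cK u) => //;
  by rewrite H ?orbT.
split.
  move=> u v; rewrite /swc; case: ifP => uK; case: ifP => vK.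
  - by rewrite Cs.
  - by rewrite out ?vK // Cs.
  - by rewrite out ?uK // Cs.
  - by rewrite Cs.
move=> u v w vw; rewrite /swc; case: ifP => uK; last by apply: Cd.
apply/disjE => e; rewrite !inE => H1 H2; by move: (Cd u v w vw) => /disjE /(_ _ H1 H2).
Qed.

Lemma swc_card al be c K u v : #|swc al be c K u v| = #|c u v|.
Proof. by rewrite /swc; case: ifP => // _; rewrite card_sw. Qed.

Lemma swc_miss al be c K u e :
  e \in miss (swc al be c K) u = if u \in K then tw al be e \in miss c u else e \in miss c u.
Proof.
rewrite /swc; case: ifP => uK; rewrite !inE; apply: eq_forallb => v;
by rewrite ?uK ?inE.
Qed.


Definition E al be c := [rel u v | (al \in c u v) || (be \in c u v)].
Definition K al be c z := [set v | connect (E al be c) z v].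

Section Leaf.
Variables (c : V -> V -> {set 'I_N}) (al be : 'I_N).
Hypothesis pc : proper c.

Definition pv a v := if [pick u | a \in c v u] is Some u then u else v.

Lemma pv_eq a v u : a \in c v u -> pv a v = u.
Proof.
rewrite /pv; case: pickP => [u' h|h] H; first exact: (proper_uniq pc h H).
by move: (h u) => /=; rewrite H.
Qed.

Lemma pv_miss a v : a \in miss c v -> pv a v = v.
Proof. by rewrite /pv; case: pickP => [u h|//]; move/missP => /(_ u); rewrite h. Qed.

Lemma pvK a v : pv a (pv a v) = v.
Proof.
rewrite {2}/pv; case: pickP => [u h|h].
  by apply: pv_eq; case: pc => Cs _; rewrite Cs.
by apply: pv_miss; apply/missP => u; move: (h u) => /= ->.
Qed.

Definition colb (b : bool) := if b then be else al.
Definition sg (s : V * bool) := (pv (colb s.2) s.1, ~~ s.2).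
Definition rh (s : V * bool) := (s.1, ~~ s.2).

Lemma sg_inj : injective sg.
Proof.
move=> [v b] [w b'] [E1 /negb_inj E2]; subst b'; congr (_, _).
by rewrite -(pvK (colb b) v) /= E1 pvK.
Qed.

Lemma sg_rh s : sg (rh (sg s)) = rh s.
Proof. by case: s => v b; rewrite /sg /rh /= negbK pvK. Qed.

Lemma iter_rh i s : iter i sg (rh (iter i sg s)) = rh s.
Proof. by elim: i s => // i IH s; rewrite [iter i.+1 sg s]iterS iterSr sg_rh IH. Qed.

Lemma bounce2 s0 i : sg s0 = rh s0 -> sg (iter i sg s0) = rh (iter i sg s0) ->
  iter (i + i) sg s0 = s0.
Proof.
move=> b0 bi; apply: sg_inj.
have : iter i sg (sg (iter i sg s0)) = sg s0 by rewrite bi iter_rh b0.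
by rewrite -iterSr -iterD addSn iterS.
Qed.

Lemma ord_dvd s0 k : iter k sg s0 = s0 -> order sg s0 %| k.
Proof.
move=> H; set L := order sg s0.
have hL : iter L sg s0 = s0 := iter_order sg_inj s0.
have hq q : iter (q * L) sg s0 = s0.
  by elim: q => // q IHq; rewrite mulSn iterD IHq hL.
have H' : iter (k %% L) sg s0 = s0.
  by rewrite (divn_eq k L) addnC iterD hq in H.
have := findex_iter (ltn_pmod k (order_gt0 sg s0)).
by rewrite H' findex0 /dvdn => <-.
Qed.

Lemma half_eq L i : 0 < i < L -> L %| i + i -> i + i = L.
Proof. by move=> /andP[h1 h2] /dvdnP[[|[|q]] Hq]; rewrite ?mulSn in Hq; lia. Qed.

Lemma leaf x w1 w2 : al \in miss c x -> al != be -> w1 != w2 -> w1 != x -> w2 != x ->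
  be \in miss c w1 -> be \in miss c w2 ->
  connect (E al be c) x w1 -> connect (E al be c) x w2 -> False.
Proof.
move=> ax ab w12 w1x w2x bw1 bw2 cw1 cw2.
set s0 := (x, false).
have b0 : sg s0 = rh s0 by rewrite /sg /rh /= pv_miss.
have Csym : forall u v, c u v = c v u by case: pc.
have O u v : E al be c u v ->
    fconnect sg s0 (u, false) && fconnect sg s0 (u, true) ->
    fconnect sg s0 (v, false) && fconnect sg s0 (v, true).
  move=> /orP[h|h] /andP[h1 h2].
  - have e1 : sg (u, false) = (v, true) by rewrite /sg /= (pv_eq h).
    have e2 : sg (v, false) = (u, true) by rewrite /sg /= (pv_eq (u := u)) // Csym.
    apply/andP; split; last by apply: connect_trans h1 _; apply: connect1; rewrite /= e1.
    apply: connect_trans h2 _; rewrite fconnect_sym; last exact: sg_inj.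
    by apply: connect1; rewrite /= e2.
  - have e1 : sg (u, true) = (v, false) by rewrite /sg /= (pv_eq h).
    have e2 : sg (v, true) = (u, false) by rewrite /sg /= (pv_eq (u := u)) // Csym.
    apply/andP; split; first by apply: connect_trans h2 _; apply: connect1; rewrite /= e1.
    apply: connect_trans h1 _; rewrite fconnect_sym; last exact: sg_inj.
    by apply: connect1; rewrite /= e2.
have orb v : connect (E al be c) x v -> fconnect sg s0 (v, true).
  case/connectP => p Hp ->.
  suff : fconnect sg s0 (last x p, false) && fconnect sg s0 (last x p, true) by case/andP.
  have : fconnect sg s0 (x, false) && fconnect sg s0 (x, true).
    by rewrite connect0 /=; apply: connect1; rewrite /= b0.
  move: Hp; move: (x) => u0 Hp Hu0.
  elim: p u0 Hp Hu0 => //= y p IH u /andP[h1 h2] Hu.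
  by apply: IH => //; apply: O h1 Hu.
have idx w : w != x -> be \in miss c w -> connect (E al be c) x w ->
    exists2 i, iter i sg s0 = (w, true) & i + i = order sg s0.
  move=> wx bw cw; have f1 := orb w cw.
  exists (findex sg s0 (w, true)); first exact: iter_findex.
  apply: half_eq; last first.
    apply: ord_dvd; apply: bounce2 => //; rewrite iter_findex //.
    by rewrite /sg /rh /= pv_miss.
  rewrite findex_max // andbT lt0n; apply/eqP => E0.
  have := iter_findex f1; rewrite E0 /= => -[E1]; by rewrite E1 eqxx in wx.
have [i1 h1 e1] := idx w1 w1x bw1 cw1.
have [i2 h2 e2] := idx w2 w2x bw2 cw2.
have : i1 = i2 by lia.
by move=> E12; move: h1 h2; rewrite E12 => -> [E']; rewrite E' eqxx in w12.
Qed.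

End Leaf.

Lemma path_belast (T : eqType) (e e' : rel T) (P : T -> Prop) y p :
  path e y p -> (forall s t, P s -> e s t -> e' s t) ->
  (forall s, s \in belast y p -> P s) -> path e' y p.
Proof.
elim: p y => //= t p IH y /andP[h1 h2] H HP.
rewrite (H _ _ (HP y (mem_head _ _)) h1) /=.
by apply: IH => // s hs; apply: HP; rewrite inE hs orbT.
Qed.

Section Step.
Variables (c0 : V -> V -> {set 'I_N}) (x y0 : V).
Hypothesis pc0 : proper c0.
Hypothesis bc0 : bnd c0.
Hypothesis axy : adj x y0.
Hypothesis def0 : #|c0 x y0| < m x y0.
Hypothesis stuck : ~ exists c', proper c' /\ bnd c' /\ total c0 < total c'.

Definition Good c := proper c /\ forall u v, #|c u v| = #|c0 u v|.

Lemma Good_bnd c : Good c -> bnd c.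
Proof. by move=> [_ H] u v; rewrite H. Qed.

Lemma Good_supp c u v : Good c -> ~~ adj u v -> c u v = set0.
Proof. by move/Good_bnd => b; apply: bnd_supp. Qed.

Lemma Good_ne c u v e : Good c -> e \in c u v -> u != v.
Proof.
move=> G H; apply/eqP => E; subst; move: H; rewrite Good_supp ?inE //.
by rewrite adj_irr.
Qed.

Lemma Good_adj c u v e : Good c -> e \in c u v -> adj u v.
Proof. by move=> G H; apply/negPn/negP => /(Good_supp G) E0; move: H; rewrite E0 inE. Qed.

Lemma Good_sym c u v : Good c -> c u v = c v u.
Proof. by case=> [[]]. Qed.

Lemma Good_dis c u v w e : Good c -> v != w -> e \in c u v -> e \in c u w -> False.
Proof. by case=> [[_ D] _] /D /disjE; apply. Qed.

Lemma Good_total c : Good c -> total c = total c0.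
Proof. by move=> [_ H]; apply: eq_bigr => u _; apply: eq_bigr => v _; rewrite H. Qed.

Definition R c := [rel y z | [exists e, (e \in c x z) && (e \in miss c y)]].

Lemma xy0 : x != y0.
Proof. by apply/eqP => E; move: axy; rewrite E adj_irr. Qed.

Lemma path_ne c y p : Good c -> path (R c) y p -> all (fun t => t != x) p.
Proof.
move=> G; elim: p y => //= t p IH y /andP[/existsP[e /andP[H _]] Hp].
rewrite (IH t Hp) andbT eq_sym; exact: (Good_ne G H).
Qed.

Lemma A_path p : forall c z g, Good c -> path (R c) y0 p -> uniq (y0 :: p) ->
  last y0 p = z -> g \in miss c x -> g \in miss c z -> False.
Proof.
elim/last_ind: p => [|p t IH] c z g G.
  move=> _ _ /= <- gx gy; apply: stuck.
  have Hc := G; move: Hc => [[Cs Cd] Csz].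
  exists (upd c x y0 (g |: c x y0)); split; [|split].
  - apply: upd_proper => //; first exact: xy0.
    + move=> w wy; apply/disjE => e; rewrite in_setU1 => /orP[/eqP ->|h1] h2.
        by move/missP: gx => /(_ w); rewrite h2.
      by apply: (Good_dis G _ h1 h2); rewrite eq_sym.
    + move=> w wx; apply/disjE => e; rewrite in_setU1 => /orP[/eqP ->|h1] h2.
        by move/missP: gy => /(_ w); rewrite h2.
      by rewrite Cs in h1; apply: (Good_dis G _ h1 h2); rewrite eq_sym.
  - have Hb : #|g |: c x y0| <= m x y0.
      rewrite cardsU1 Csz; apply: leq_trans def0; rewrite -add1n leq_add2r; exact: leq_b1.
    move=> u v; rewrite /upd; case: ifP => [/orP[]/andP[/eqP-> /eqP->]|_].
    + exact: Hb.
    + by rewrite m_sym.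
    + exact: Good_bnd.
  - rewrite -(Good_total G); apply: (total_lt (a := x) (b := y0)).
      move=> u v; rewrite /upd; case: ifP => [/orP[]/andP[/eqP-> /eqP->]|_] //.
      + by apply: subset_leq_card; apply: finset.subsetUr.
      + by rewrite Cs; apply: subset_leq_card; apply: finset.subsetUr.
    rewrite /upd !eqxx /= cardsU1.
    suff -> : g \notin c x y0 by [].
    by move/missP: gx => /(_ y0).
move=> Hp U; rewrite last_rcons => <- gx gz.
move: Hp; rewrite rcons_path => /andP[Hp /existsP[a /andP[axt au]]].
set u := last y0 p in au.
have Hc := G; move: Hc => [[Cs Cd] Csz].
have gxt : g \notin c x t by move/missP: gx => /(_ t).
have ga : g != a by apply/eqP => E; subst; move: gxt; rewrite axt.
have xt : x != t := Good_ne G axt.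
have ux : u != x by apply/eqP => E; rewrite E in au; move/missP: au => /(_ t); rewrite axt.
move: U; rewrite -rcons_cons rcons_uniq => /andP[tn U].
have ut : u != t by apply/eqP => E; move: tn; rewrite -E mem_last.
set c' := upd c x t (g |: (c x t :\ a)).
have same s w : s != x -> s != t -> c' s w = c s w.
  by move=> sx st; rewrite /c' upd_ne // (negbTE sx) (negbTE st).
have G' : Good c'.
  split.
    apply: upd_proper => //.
    + move=> w wt; apply/disjE => e; rewrite in_setU1 => /orP[/eqP ->|h1] h2.
        by move/missP: gx => /(_ w); rewrite h2.
      by move: h1; rewrite inE => /andP[_ h1]; apply: (Good_dis G _ h1 h2); rewrite eq_sym.
    + move=> w wx; apply/disjE => e; rewrite in_setU1 => /orP[/eqP ->|h1] h2.
        by move/missP: gz => /(_ w); rewrite h2.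
      move: h1; rewrite inE => /andP[_ h1].
      by rewrite Cs in h1; apply: (Good_dis G _ h1 h2); rewrite eq_sym.
  have Hs : #|g |: (c x t :\ a)| = #|c0 x t|.
    rewrite cardsU1 -Csz (cardsD1 a (c x t)) axt inE negb_and gxt orbT.
    by [].
  move=> u' v'; rewrite /c' /upd; case: ifP => [/orP[]/andP[/eqP-> /eqP->]|_] //.
  by rewrite Hs; case: pc0 => ->.
apply: (IH c' u a G').
- apply: (sub_in_path (P := [pred s | (s != t) && (s != x)]) (e := R c)); last exact: Hp.
    move=> s s' /andP[st sx] /andP[s't s'x] /existsP[e /andP[h1 h2]].
    apply/existsP; exists e; apply/andP; split.
      by rewrite /c' upd_ne // eqxx /= (negbTE s't) (negbTE xt).
    by apply/missP => w; rewrite same //; move/missP: h2.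
  rewrite /= -andbA; apply/and3P; split.
  + by apply: contraNneq tn => <-; rewrite mem_head.
  + by rewrite eq_sym xy0.
  + move: (path_ne G Hp) tn; rewrite inE negb_or => /allP Hx /andP[_ tn].
    by apply/allP => s hs /=; rewrite Hx // andbT; apply: contraNneq tn => <-.
- exact: U.
- by [].
- apply/missP => w; rewrite /c' /upd eqxx /= (negbTE xt) /= orbF.
  case: ifP => [_|/negbT wt].
    by rewrite in_setU1 negb_or eq_sym ga !inE eqxx.
  by apply/negP => h; apply: (Good_dis G _ axt h); rewrite eq_sym.
- by apply/missP => w; rewrite same //; move/missP: au.
Qed.

Lemma A c z : Good c -> connect (R c) y0 z -> [disjoint miss c x & miss c z].
Proof.
move=> G /connectP[p Hp ->]; case: (shortenP Hp) => p' Hp' U _.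
by apply/disjE => g h1 h2; apply: (A_path G Hp' U erefl h1 h2).
Qed.



Lemma E_sym al be c : Good c -> symmetric (E al be c).
Proof. by move=> G u v; rewrite /= (Good_sym _ _ G). Qed.

Lemma K_closed al be c z : closedK al be c (K al be c z).
Proof.
move=> u v; rewrite !inE => h1 h2; apply: connect_trans h1 _; exact: connect1.
Qed.

Lemma zK al be c p z : Good c -> al \in miss c x -> path (R c) y0 p -> last y0 p = z ->
  (forall s, s \in belast y0 p -> be \in miss c s -> s \in K al be c x) ->
  be \in miss c z -> z \in K al be c x.
Proof.
move=> G ax Hp Hz Hbel bz; apply/negPn/negP => zK.
have Csym := sym_connect_sym (E_sym al be G).
set K' := K al be c z.
have xK' : x \notin K' by rewrite inE Csym; apply: contra zK; rewrite inE.
have disj s : s \in K al be c x -> s \notin K'.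
  rewrite !inE => h1; apply: contra zK => h2; rewrite inE.
  by apply: connect_trans h1 _; rewrite Csym.
set c' := swc al be c K'.
have G' : Good c'.
  split; first by apply: swc_proper; [case: G | apply: K_closed].
  by move=> u v; rewrite swc_card; case: G.
have Hp' : path (R c') y0 p.
  apply: (path_belast (P := fun s => be \in miss c s -> s \in K al be c x)) Hp _ Hbel.
  move=> s t Hs /existsP[e /andP[h1 h2]]; apply/existsP; exists e.
  have ex : c' x t = c x t by rewrite /c' /swc (negbTE xK').
  rewrite ex h1 /= swc_miss.
  have ea : e != al by apply/eqP => E; subst; move/missP: ax => /(_ t); rewrite h1.
  case: (eqVneq e be) => [Eb|eb].
    by subst e; rewrite (negbTE (disj s (Hs h2))).
  by rewrite tw_id //; case: ifP.
have Hc : connect (R c') y0 z by apply/connectP; exists p.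
move/disjE: (A G' Hc) => D; apply: (D al); first by rewrite swc_miss (negbTE xK').
by rewrite swc_miss inE connect0 tw_al.
Qed.

Lemma Kall al be c p : Good c -> al \in miss c x -> path (R c) y0 p ->
  forall s, s \in y0 :: p -> be \in miss c s -> s \in K al be c x.
Proof.
elim/last_ind: p => [|p t IH] G ax Hp s.
  by rewrite inE => /eqP -> bs; apply: (zK (p := [::]) G ax).
move: (Hp); rewrite rcons_path => /andP[Hp1 _].
rewrite -rcons_cons mem_rcons inE => /orP[/eqP ->|hs] bs.
  apply: (zK G ax Hp (last_rcons _ _ _)) => //; rewrite belast_rcons => s' hs'.
  exact: IH.
exact: IH.
Qed.

Lemma FK al be c z : Good c -> al \in miss c x -> connect (R c) y0 z ->
  be \in miss c z -> z \in K al be c x.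
Proof. move=> G ax /connectP[p Hp ->]; apply: (Kall G ax Hp); exact: mem_last. Qed.

Lemma F_ne c z : Good c -> connect (R c) y0 z -> z != x.
Proof.
move=> G /connectP[p Hp ->]; have : last y0 p \in y0 :: p by exact: mem_last.
rewrite inE => /orP[/eqP ->|h]; first by rewrite eq_sym xy0.
by move/allP: (path_ne G Hp); apply.
Qed.


Lemma main_false : False.
Proof.
have G0 : Good c0 by split.
have axy' : adj y0 x by rewrite adj_sym.
set F := [set z | connect (R c0) y0 z].
have Fy0 : y0 \in F by rewrite inE connect0.
have Fadj z : z \in F -> adj x z.
  rewrite inE => /connectP[p Hp ->]; case/lastP: p Hp => [|p t] Hp //.
  rewrite last_rcons; move: Hp; rewrite rcons_path => /andP[_ /existsP[e /andP[h _]]].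
  exact: Good_adj G0 h.
have sum_lt (f g : V -> nat) w : (forall v, f v <= g v) -> f w < g w ->
    \sum_v f v < \sum_v g v.
  move=> hle hlt; rewrite (bigD1 w) // [X in _ < X](bigD1 w) //= -addSn.
  by apply: leq_add => //; apply: leq_sum.
have [al ax] : exists al, al \in miss c0 x.
  have : 0 < #|miss c0 x|.
    have h1 := miss_card c0 x.
    have h2 : \sum_v #|c0 x v| < \sum_v m x v by apply: (sum_lt _ _ y0).
    have h3 := mC axy'.
    lia.
  by rewrite card_gt0 => /set0Pn.
have Fmiss z : z \in F -> miss c0 z \subset \bigcup_(w in F) c0 x w.
  move=> zF; have zF' : connect (R c0) y0 z by rewrite inE in zF.
  apply/fintype.subsetP => e ez.
  have : e \notin miss c0 x.
    by apply/negP => ex; move/disjE: (A G0 zF') => /(_ e ex ez).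
  rewrite inE negb_forall => /existsP[w]; rewrite negbK => ew.
  apply/finset.bigcupP; exists w => //; rewrite inE.
  apply: connect_trans zF' (connect1 _); apply/existsP; exists e; by rewrite ew ez.
have Fdisj z1 z2 : z1 \in F -> z2 \in F -> z1 != z2 -> [disjoint miss c0 z1 & miss c0 z2].
  rewrite !inE => h1 h2 z12; apply/disjE => be b1 b2.
  have abe : al != be.
    by apply/eqP => E; subst; move: (A G0 h1) => /disjE /(_ _ ax b1).
  have k1 := FK (be := be) G0 ax h1 b1.
  have k2 := FK (be := be) G0 ax h2 b2.
  rewrite inE in k1; rewrite inE in k2.
  exact: (leaf pc0 ax abe z12 (F_ne G0 h1) (F_ne G0 h2) b1 b2 k1 k2).
set U := \bigcup_(w in F) c0 x w.
have S1 : \sum_(z in F) #|miss c0 z| <= #|U|.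
  rewrite -big_enum -card_bigcup_disj ?enum_uniq //; last first.
    by move=> a b; rewrite !mem_enum; apply: Fdisj.
  apply: subset_leq_card; rewrite big_enum; apply/fintype.subsetP => e /finset.bigcupP[z hz he].
  by move/fintype.subsetP: (Fmiss z hz); apply.
have S2 : #|U| <= \sum_(w in F) #|c0 x w| := card_bigcup_le _ _.
have S3 : \sum_(z in F) #|c0 x z| < \sum_(z in F) #|miss c0 z|.
  rewrite (bigD1 y0) // [X in _ < X](bigD1 y0) //= -addSn.
  apply: leq_add.
    have h1 := miss_card c0 y0.
    have h2 : \sum_v #|c0 y0 v| < \sum_v m y0 v.
      by apply: (sum_lt _ _ x) => //; rewrite m_sym; case: pc0 => Cs _; rewrite Cs.
    have h3 := mC axy.
    apply: leq_ltn_trans (bc0 x y0) _.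
    exact: arith1 h1 h2 h3.
  apply: leq_sum => z /andP[zF _].
  have h1 := miss_card c0 z.
  have h2 : \sum_v #|c0 z v| <= \sum_v m z v by apply: leq_sum.
  have h3 := mC (Fadj z zF).
  exact: arith2 h1 h2 h3 (bc0 x z).
lia.
Qed.

End Step.

Lemma step c x y0 : proper c -> bnd c -> adj x y0 -> #|c x y0| < m x y0 ->
  exists c', proper c' /\ bnd c' /\ total c < total c'.
Proof. move=> pc bc a d; apply: contrapT => H; exact: (main_false pc bc a d H). Qed.

Lemma full : exists c, proper c /\ bnd c /\ forall u v, adj u v -> m u v <= #|c u v|.
Proof.
set Mt := \sum_u \sum_v m u v.
have tot_le c : bnd c -> total c <= Mt.
  by move=> bc; apply: leq_sum => u _; apply: leq_sum => v _.
suff H : forall k c, proper c -> bnd c -> Mt - total c <= k ->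
    exists c, proper c /\ bnd c /\ forall u v, adj u v -> m u v <= #|c u v|.
  apply: (H Mt (fun _ _ => set0)).
  - by split => // u v w _; apply/disjE => e; rewrite inE.
  - by move=> u v; rewrite cards0.
  - exact: leq_subr.
elim=> [|k IH] c pc bc hk.
  case: (pselect (exists u v, adj u v /\ #|c u v| < m u v)) => [[u [v [a h]]]|nh].
    have [c' [_ [bc' lt]]] := step pc bc a h.
    have := tot_le c' bc'; have := tot_le c bc; lia.
  exists c; split => //; split => // u v a; rewrite leqNgt; apply/negP => h; apply: nh.
  by exists u, v.
case: (pselect (exists u v, adj u v /\ #|c u v| < m u v)) => [[u [v [a h]]]|nh].
  have [c' [pc' [bc' lt]]] := step pc bc a h.
  apply: (IH c' pc' bc'); have := tot_le c' bc'; lia.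
exists c; split => //; split => // u v a; rewrite leqNgt; apply/negP => h; apply: nh.
by exists u, v.
Qed.

End Core.

End VZ.

Local Open Scope ring_scope.

Lemma doubleton (V : finType) (a b u v : V) : [set a; b] = [set u; v] -> a != b ->
  (a = u /\ b = v) \/ (a = v /\ b = u).
Proof.
move=> E ab.
have ha : a \in [set u; v] by rewrite -E set21.
have hb : b \in [set u; v] by rewrite -E set22.
move: ha hb; rewrite !inE => /orP[/eqP ha|/eqP ha] /orP[/eqP hb|/eqP hb]; subst.
- by rewrite eqxx in ab.
- by left.
- by right.
- by rewrite eqxx in ab.
Qed.

Lemma itv_mem (R : realType) (a b r : R) : (`[a, b[%classic r) <-> (a <= r /\ r < b).
Proof. by rewrite /= in_itv /=; split => [/andP[]|[-> ->]]. Qed.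

Theorem theorem6p1 (R : realType) (V : finType) (adj : rel V)
    (f : edge adj -> rat) :
  simple_graph adj ->
  demand_fun f ->
  (forall (x : edge adj) (u v : V), adj u v -> proj1_sig x = [set u; v] ->
     f x <= 1 / (maxn (deg adj u) (deg adj v)).+1%:R) ->
  exists phi : edge adj -> set R, f_coloring f phi.
Proof.
move=> [asym airr] _ hf.
have adj_sym : symmetric adj by move=> u v; rewrite asym.
have adj_irr : irreflexive adj by move=> u; apply: negbTE.
set N := (#|V|)`!.
set D := fun u v => (maxn (deg adj u) (deg adj v)).+1.
set m := fun u v => if adj u v then (N %/ D u v)%N else 0%N.
have degl u : (deg adj u < #|V|)%N.
  rewrite /deg; apply: (@leq_ltn_trans #|[set~ u]|).
    by apply: subset_leq_card; apply/fintype.subsetP => v; rewrite !inE => h; apply: contraTneq h => ->; rewrite adj_irr.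
  by rewrite cardsC1 ltn_predL; apply/card_gt0P; exists u.
have Dpos u v : (0 < D u v)%N by [].
have Ddvd u v : (D u v %| N)%N.
  by apply: dvdn_fact; rewrite Dpos /= /D gtn_max !degl.
have m_sym u v : m u v = m v u by rewrite /m /D adj_sym maxnC.
have m_adj u v : ~~ adj u v -> m u v = 0%N by rewrite /m => /negbTE ->.
have mC x y : adj x y -> (\sum_v m y v + m x y <= N)%N.
  move=> axy; set q := (N %/ (deg adj y).+1)%N.
  have le2 : (m x y <= q)%N.
    by rewrite /m axy; apply: leq_div2l => //; rewrite /D ltnS leq_maxr.
  have le1 : (\sum_v m y v <= \sum_(v in [set v | adj y v]) q)%N.
    rewrite [X in (_ <= X)%N]big_mkcond /=; apply: leq_sum => v _; rewrite inE /m; case: ifP => // _.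
    by apply: leq_div2l => //; rewrite /D ltnS leq_maxl.
  rewrite sum_nat_const in le1.
  apply: (@leq_trans ((deg adj y).+1 * q)%N); last by rewrite mulnC leq_divM.
  by rewrite mulSn addnC leq_add.
have [c [pc [bc hc]]] := VZ.full adj_sym adj_irr m_sym m_adj mC.
have ends (e : edge adj) : exists u v, adj u v /\ proj1_sig e = [set u; v].
  by case: e => A /= /existsP[u /existsP[v /andP[a /eqP E]]]; exists u, v.
have ends_at (e : edge adj) w : w \in proj1_sig e -> exists a, adj w a /\ proj1_sig e = [set w; a].
  have [u [v [a E]]] := ends e; rewrite E !inE => /orP[/eqP->|/eqP->].
    by exists v.
  by exists u; rewrite adj_sym finset.setUC.
set colE := fun e : edge adj =>
  \bigcup_(p : V * V | adj p.1 p.2 && (proj1_sig e == [set p.1; p.2])) c p.1 p.2.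
have colE_eq e u v : adj u v -> proj1_sig e = [set u; v] -> colE e = c u v.
  move=> a E; apply/setP => i; apply/bigcupP/idP => [[[p1 p2] /= /andP[a' /eqP E'] h]|h].
    have p12 : p1 != p2 by apply/eqP => E0; rewrite E0 adj_irr in a'.
    rewrite E in E'; move: h; have [[-> ->]|[-> ->]] := @doubleton V p1 p2 u v (esym E') p12 => //.
    by case: pc => Cs _; rewrite Cs.
  by exists (u, v) => //=; rewrite a E eqxx.
have Npos : (0 < N)%N by apply: fact_gt0.
set d : R := (N%:R)^-1.
have dpos : 0 < d by rewrite invr_gt0 ltr0n.
pose F := fun i : 'I_N => `[i%:R * d, i.+1%:R * d[%classic : set R.
pose phi := fun e : edge adj => \big[setU/set0]_(i < N | i \in colE e) F i.
have memphi e r : phi e r -> exists2 i : 'I_N, i \in colE e & F i r.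
  rewrite /phi; elim/big_rec: _ => [//|i X hi IH [h|h]]; first by exists i.
  exact: IH h.
have Fdisj i j r : F i r -> F j r -> i = j.
  move=> /itv_mem[h1 h2] /itv_mem[h3 h4].
  have l1 : (i < j.+1)%N.
    by rewrite -(ltr_nat R) -(ltr_pM2r dpos); apply: le_lt_trans h1 h4.
  have l2 : (j < i.+1)%N.
    by rewrite -(ltr_nat R) -(ltr_pM2r dpos); apply: le_lt_trans h3 h2.
  by apply: val_inj; apply/eqP; rewrite eqn_leq; apply/andP; split; rewrite -ltnS.
have Nd : N%:R * d = 1 by rewrite mulfV // pnatr_eq0 -lt0n.
exists phi; split; [|split].
- move=> e; split.
    by apply: bigsetU_measurable => i _; exact: measurable_itv.
  move=> r /memphi[i _ /itv_mem[h1 h2]]; rewrite /= in_itv /=; apply/andP; split.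
    by apply: le_trans h1; apply: mulr_ge0 => //; exact: ltW.
  apply: ltW; apply: (lt_le_trans h2); rewrite -[X in _ <= X]Nd; apply: ler_wpM2r; first exact: ltW.
  by rewrite ler_nat; exact: ltn_ord.
- move=> e e' [ne [w [hw hw']]]; rewrite -subset0 => r [/memphi[i hi Fi] /memphi[j hj Fj]].
  have ij := Fdisj _ _ _ Fi Fj; subst j.
  have [a [wa Ea]] := ends_at e w hw.
  have [b [wb Eb]] := ends_at e' w hw'.
  rewrite (colE_eq _ _ _ wa Ea) in hi; rewrite (colE_eq _ _ _ wb Eb) in hj.
  have ab : a != b.
    by apply: contra_not_neq ne => E0; apply: val_inj; rewrite /= Ea Eb E0.
  by case: pc => _ /(_ w a b ab) /VZ.disjE /(_ i hi hj).
move=> e; have [u [v [a E]]] := ends e.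
have mF i : lebesgue_measure (F i) = d%:E.
  rewrite /F lebesgue_measure_itv /= lte_fin (ltr_pM2r dpos) ltr_nat ltnSn -EFinD.
  by rewrite -mulrBl mulrS addrK mul1r.
rewrite /phi measure_bigsetU_ord; first last.
- by move=> i j _ _ [r [h1 h2]]; exact: Fdisj h1 h2.
- by move=> i; exact: measurable_itv.
rewrite (eq_bigr (fun _ => d%:E)); last by move=> i _; exact: mF.
rewrite sumEFin sumr_const lee_fin (colE_eq _ _ _ a E).
have hfe := hf e u v a E.
set q := (N %/ D u v)%N.
have hq : (q <= #|c u v|)%N by have := hc u v a; rewrite /m a.
have Nq : N = (q * D u v)%N by rewrite divnK.
have qpos : (0 < q)%N by rewrite divn_gt0 // dvdn_leq.
have e1 : 1 / (D u v)%:R = d * q%:R :> R.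
  rewrite /d Nq natrM invfM mulrAC mulVf ?mul1r ?div1r //.
  by rewrite pnatr_eq0 -lt0n.
apply: (@le_trans _ _ (ratr (1 / (D u v)%:R))).
  by rewrite ler_rat.
rewrite fmorph_div rmorph1 rmorph_nat e1 -[X in _ <= X]mulr_natr.
by rewrite ler_pM2l // ler_nat.
Qed.
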